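(* Fix an integer $d\ge 1$ and let $n$ be the problem size. Let $\mathcal{L}$ be the oracle of a uniformly random $d$-Serial Simon's instance with target period $s=s_d$ (as defined in the context). Let $\mathcal{A}^{\mathcal{L}}=\Pi\circ U_{d+1}\circ\mathcal{L}\circ U_d\circ\cdots\circ\mathcal{L}\circ U_2\circ\mathcal{L}\circ U_1$ be any $\mathrm{QNC}_d$ circuit with oracle access to $\mathcal{L}$, acting on $\mathrm{poly}(n)$ qubits initialised to $|0\cdots0\rangle$, where each $U_j$ is a single-layer unitary (chosen independently of the oracle), each application of $\mathcal{L}$ may consist of polynomially many parallel queries, and $\Pi$ is a computational-basis measurement whose outcome is the output. Then $\Pr[s\leftarrow\mathcal{A}^{\mathcal{L}}]\le \mathrm{poly}(n)\cdot 2^{-n}$; in particular the success probability is negligible.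
   Context: A Simon function on $n$ bits is a pair $(f,s)$ with $s\in\{0,1\}^n\setminus\{0^n\}$ and $f:\{0,1\}^n\to\{0,1\}^n$ two-to-one such that $f(x)=f(y)\iff y\in\{x,x\oplus s\}$; ''uniformly random Simon function'' means $(f,s)$ is uniform over all such pairs. A single-layer unitary is a product of one- and two-qubit gates acting on pairwise disjoint qubits. The oracle of a function $F$ (possibly taking value $\perp$, encoded as a distinguished string of the response register) acts as $|x\rangle|a\rangle\mapsto|x\rangle|a\oplus F(x)\rangle$; oracle access to several functions means access to all of them (in parallel). $d$-Serial Simon's instance: sample independent uniformly random Simon functions $(f_i,s_i)$, $i=0,1,\dots,d$, on $n$ bits. Define $L_0(x,z)=f_0(x)$ and, for $1\le i\le d$, $L_i(x,z)=f_i(x)$ if $z=s_{i-1}$ and $L_i(x,z)=\perp$ otherwise (for $x,z\in\{0,1\}^n$). The oracle $\mathcal{L}$ is the oracle associated with $(L_0,\dots,L_d)$. The (search) problem is: given $\mathcal{L}$, output $s_d$. *)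

(* Defs.v *)
From HB Require Import structures.
From mathcomp Require Import all_boot all_order all_algebra.
From mathcomp Require Import complex reals.

Set Implicit Arguments.
Unset Strict Implicit.
Unset Printing Implicit Defensive.

Import Order.TTheory GRing.Theory Num.Theory.
Local Open Scope ring_scope.

Definition bits (k : nat) := {ffun 'I_k -> bool}.
Definition bzero (k : nat) : bits k := [ffun => false].
Definition bxor (k : nat) (a b : bits k) : bits k := [ffun i => addb (a i) (b i)].

Definition is_simon (n : nat) (f : {ffun bits n -> bits n}) (s : bits n) : bool :=
  (s != bzero n) &&
  [forall x : bits n, forall y : bits n, (f x == f y) == ((y == x) || (y == bxor x s))].

Definition instance (n d : nat) := {ffun 'I_d.+1 -> {ffun bits n -> bits n} * bits n}.
Definition valid_instance (n d : nat) (I : instance n d) : bool :=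
  [forall i, is_simon (I i).1 (I i).2].

(* L_i(x,z); None stands for the value \bot *)
Definition Lval (n d : nat) (I : instance n d) (i : 'I_d.+1) (x z : bits n)
  : option (bits n) :=
  if (i : nat) == 0%N then Some ((I i).1 x)
  else if z == (I (inord i.-1)).2 then Some ((I i).1 x) else None.

(* encoding of a response in an (n+1)-bit response register:
   y in {0,1}^n  ~>  0 y ,   \bot  ~>  1 0^n *)
Definition enc (n : nat) (r : option (bits n)) : bits n.+1 :=
  match r with
  | Some y => [ffun j => if unlift ord0 j is Some j' then y j' else false]
  | None => [ffun j => j == ord0]
  end.

Section Quantum.
Variable C : numClosedFieldType.
Variable m : nat.

(* states / operators on m qubits, in the computational basis *)
Definition qstate := bits m -> C.
Definition qop := bits m -> bits m -> C.

Definition apply_op (M : qop) (v : qstate) : qstate :=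
  fun y => \sum_(x : bits m) M y x * v x.
Definition mul_op (M N : qop) : qop :=
  fun y x => \sum_(z : bits m) M y z * N z x.
Definition id_op : qop := fun y x => (y == x)%:R.
Definition unitary (M : qop) : Prop :=
  forall y x, \sum_(z : bits m) (M z y)^* * M z x = (y == x)%:R.

(* a gate acts on the qubits of gsupp; gmat gives its matrix on the restriction
   of basis strings to gsupp (values on masked strings only are used) *)
Record gate := Gate { gsupp : {set 'I_m}; gmat : bits m -> bits m -> C }.

Definition agree_out (S : {set 'I_m}) (y x : bits m) : bool :=
  [forall i, (i \notin S) ==> (y i == x i)].
Definition maskS (S : {set 'I_m}) (x : bits m) : bits m :=
  [ffun i => (i \in S) && x i].
(* the operator gmat (x) identity *)
Definition gate_op (g : gate) : qop :=
  fun y x => if agree_out (gsupp g) y x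
             then gmat g (maskS (gsupp g) y) (maskS (gsupp g) x) else 0.
Definition valid_gate (g : gate) : Prop :=
  (0 < #|gsupp g| <= 2)%N /\ unitary (gate_op g).

Definition layer := seq gate.
Definition valid_layer (L : layer) : Prop :=
  foldr (fun g P => valid_gate g /\ P) True L /\
  pairwise (fun g h => [disjoint gsupp g & gsupp h]) L.
Definition layer_op (L : layer) : qop := foldr (fun g acc => mul_op (gate_op g) acc) id_op L.

Variables n d : nat.
(* one query to L_(qidx): input register (x,z) of 2n qubits, response register of n+1 qubits *)
Record query := Query { qidx : 'I_d.+1; qin : 'I_(n + n) -> 'I_m; qout : 'I_n.+1 -> 'I_m }.

Definition qsupp (q : query) : {set 'I_m} :=
  [set qin q j | j : 'I_(n + n)] :|: [set qout q j | j : 'I_n.+1].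
Definition valid_query (q : query) : bool :=
  [&& injectiveb (qin q), injectiveb (qout q) &
      [disjoint [set qin q j | j : 'I_(n + n)] & [set qout q j | j : 'I_n.+1]]].

Definition query_map (I : instance n d) (q : query) (w : bits m) : bits m :=
  let x : bits n := [ffun j => w (qin q (lshift n j))] in
  let z : bits n := [ffun j => w (qin q (rshift n j))] in
  let a := enc (Lval I (qidx q) x z) in
  [ffun i => if [pick j | qout q j == i] is Some j then addb (w i) (a j) else w i].
(* |x>|a> |-> |x>|a xor L(x)> *)
Definition query_op (I : instance n d) (q : query) : qop :=
  fun y x => (y == query_map I q x)%:R.

Definition olayer := seq query.
Definition valid_olayer (Q : olayer) : Prop :=
  all valid_query Q /\
  pairwise (fun q q' => [disjoint qsupp q & qsupp q']) Q.
Definition olayer_op (I : instance n d) (Q : olayer) : qop :=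
  foldr (fun q acc => mul_op (query_op I q) acc) id_op Q.

(* ---- QNC_d circuit with oracle access ----
   Pi o U_{d+1} o L o U_d o ... o L o U_1 ; cU ord0 = U_1, cU (lift ord0 j) = U_{j+2},
   cQ j = the (j+1)-th oracle application; the output is the measured n-qubit register cout *)
Record circuit := Circuit {
  cU : 'I_d.+1 -> layer;
  cQ : 'I_d -> olayer;
  cout : 'I_n -> 'I_m }.

Definition valid_circuit (c : circuit) : Prop :=
  (forall j, valid_layer (cU c j)) /\ (forall j, valid_olayer (cQ c j)) /\
  injective (cout c).

Definition init_state : qstate := fun x => (x == bzero m)%:R.

Definition final_state (c : circuit) (I : instance n d) : qstate :=
  foldl (fun v (j : 'I_d) =>
           apply_op (layer_op (cU c (lift ord0 j))) (apply_op (olayer_op I (cQ c j)) v))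
        (apply_op (layer_op (cU c ord0)) init_state) (enum 'I_d).

Definition success_prob (c : circuit) (I : instance n d) : C :=
  \sum_(w : bits m | [ffun j => w (cout c j)] == (I ord_max).2)
     `|final_state c I w| ^+ 2.

Definition avg_success (c : circuit) : C :=
  (\sum_(I : instance n d | valid_instance I) success_prob c I) /
  (#|[set I : instance n d | valid_instance I]|)%:R.

End Quantum.

(* Main.v *)
Require Import Defs.
From HB Require Import structures.
From mathcomp Require Import all_boot all_order all_algebra.
From mathcomp Require Import complex reals.
From Stdlib Require Import FunctionalExtensionality.
From mathcomp Require Import ring zify.
Import Order.TTheory GRing.Theory Num.Theory.
Local Open Scope ring_scope.
Set Implicit Arguments.
Unset Strict Implicit.
Section A.
Variable C : numClosedFieldType.
Variable m : nat.
Definition nrm2 (v : qstate C m) : C := \sum_w `|v w| ^+ 2.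
Definition vsub (u v : qstate C m) : qstate C m := fun w => u w - v w.

Lemma apply_opB (M : qop C m) u v :
  apply_op M (vsub u v) = vsub (apply_op M u) (apply_op M v).
Proof.
apply: functional_extensionality => y.
by rewrite /apply_op /vsub -sumrB; apply: eq_bigr => x _; rewrite mulrBr.
Qed.

Lemma apply_mul (M N : qop C m) v :
  apply_op (mul_op M N) v = apply_op M (apply_op N v).
Proof.
apply: functional_extensionality => y.
rewrite /apply_op /mul_op.
under eq_bigr do rewrite mulr_suml.
rewrite exchange_big /=; apply: eq_bigr => z _.
by rewrite mulr_sumr; apply: eq_bigr => x _; rewrite mulrA.
Qed.

Lemma apply_id v : apply_op (@id_op C m) v = v.
Proof.
apply: functional_extensionality => y.
rewrite /apply_op /id_op (bigD1 y) //= eqxx mul1r big1 ?addr0 //.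
by move=> x /negbTE; rewrite eq_sym => ->; rewrite mul0r.
Qed.

Lemma nrm2_unitary (M : qop C m) v : unitary M -> nrm2 (apply_op M v) = nrm2 v.
Proof.
move=> uM; rewrite /nrm2 /apply_op.
under eq_bigr do rewrite normCKC rmorph_sum /= mulr_suml.
under eq_bigr do under eq_bigr do rewrite mulr_sumr.
rewrite exchange_big /=.
under eq_bigr do rewrite exchange_big /=.
apply: eq_bigr => x _.
transitivity (\sum_(x' : bits m) (v x)^* * v x' * (x == x')%:R).
  apply: eq_bigr => x' _; rewrite -uM mulr_sumr; apply: eq_bigr => y _.
  by rewrite rmorphM /=; ring.
rewrite (bigD1 x) //= eqxx mulr1 big1 ?addr0 ?normCKC //.
by move=> x' /negbTE; rewrite eq_sym => ->; rewrite mulr0.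
Qed.

Lemma nrm2_layer (L : layer C m) v : valid_layer L ->
  nrm2 (apply_op (layer_op L) v) = nrm2 v.
Proof.
case=> + _; elim: L => [|g L IH] /=; first by rewrite apply_id.
by case=> [[_ ug] vL]; rewrite apply_mul nrm2_unitary // IH.
Qed.

Lemma normD2 (x y : C) : `|x + y| ^+ 2 <= 2 * `|x| ^+ 2 + 2 * `|y| ^+ 2.
Proof.
rewrite -subr_ge0.
have -> : 2 * `|x| ^+ 2 + 2 * `|y| ^+ 2 - `|x + y| ^+ 2 = `|x - y| ^+ 2.
  by rewrite !normCK !rmorphD !rmorphN /=; ring.
by rewrite exprn_ge0.
Qed.

Lemma nrm2_ge0 v : 0 <= nrm2 v.
Proof. by apply: sumr_ge0 => w _; rewrite exprn_ge0. Qed.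

End A.

Section B.
Variable C : numClosedFieldType.
Variables m n d : nat.
Local Notation query := (query m n d).

Definition Ftype := 'I_d.+1 -> bits n -> bits n -> option (bits n).
Definition qx (q : query) (w : bits m) : bits n := [ffun j => w (qin q (lshift n j))].
Definition qz (q : query) (w : bits m) : bits n := [ffun j => w (qin q (rshift n j))].
Definition gqmap (F : Ftype) (q : query) (w : bits m) : bits m :=
  let a := enc (F (qidx q) (qx q w) (qz q w)) in
  [ffun i => if [pick j | qout q j == i] is Some j then addb (w i) (a j) else w i].

Lemma query_mapE (I : instance n d) q : query_map I q = gqmap (Lval I) q.
Proof. by []. Qed.

Definition indisj (q q' : query) :=
  [disjoint [set qin q j | j : 'I_(n + n)] & [set qout q' j | j : 'I_n.+1]].

Lemma gqmap_in F q q' w k : indisj q q' -> gqmap F q' w (qin q k) = w (qin q k).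
Proof.
move=> dj; rewrite /gqmap ffunE; case: pickP => // j /eqP ej.
have h1 : qin q k \in [set qin q j | j : 'I_(n + n)] by apply/imsetP; exists k.
have h2 : qin q k \in [set qout q' j | j : 'I_n.+1] by apply/imsetP; exists j.
by rewrite (disjointFr dj h1) in h2.
Qed.

Lemma qx_gqmap F q q' w : indisj q q' -> qx q (gqmap F q' w) = qx q w.
Proof. by move=> dj; apply/ffunP => j; rewrite ffunE gqmap_in // ffunE. Qed.
Lemma qz_gqmap F q q' w : indisj q q' -> qz q (gqmap F q' w) = qz q w.
Proof. by move=> dj; apply/ffunP => j; rewrite ffunE gqmap_in // ffunE. Qed.

Lemma gqmapK F q : indisj q q -> involutive (gqmap F q).
Proof.
move=> dj w; apply/ffunP => i.
rewrite {1}/gqmap ffunE qx_gqmap // qz_gqmap //.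
rewrite /gqmap ffunE; case: pickP => [j _|//].
by rewrite -addbA addbb addbF.
Qed.

Definition good (Q : olayer m n d) :=
  pairwise (fun q q' => indisj q q' && indisj q' q) Q && all (fun q => indisj q q) Q.

Lemma valid_good Q : valid_olayer Q -> good Q.
Proof.
case=> vQ pQ; apply/andP; split.
  apply: sub_pairwise pQ => q q' dj; apply/andP; split.
    by apply: disjointW dj; rewrite /qsupp ?subsetUl ?subsetUr.
  by rewrite disjoint_sym in dj; apply: disjointW dj; rewrite /qsupp ?subsetUl ?subsetUr.
by apply: sub_all vQ => q /and3P [].
Qed.

Lemma apply_query (I : instance n d) q (u : qstate C m) : indisj q q ->
  apply_op (@query_op C m n d I q) u = fun y => u (query_map I q y).
Proof.
move=> dj; apply: functional_extensionality => y.
have K := gqmapK (Lval I) dj.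
rewrite /apply_op /query_op (bigD1 (query_map I q y)) //= query_mapE K eqxx mul1r.
rewrite big1 ?addr0 // => x nx.
suff -> : (y == gqmap (Lval I) q x) = false by rewrite mul0r.
apply/negbTE; apply: contra nx => /eqP ->; by rewrite K.
Qed.

Fixpoint gperm (F : Ftype) (Q : olayer m n d) (y : bits m) : bits m :=
  if Q is q :: Q' then gperm F Q' (gqmap F q y) else y.
Definition gapp (F : Ftype) (Q : olayer m n d) (v : qstate C m) : qstate C m :=
  fun y => v (gperm F Q y).

Lemma gperm_inj F Q : all (fun q => indisj q q) Q -> injective (gperm F Q).
Proof.
elim: Q => [|q Q IH] /=; first by move=> _ x y.
case/andP=> dq aQ x y e; apply: (can_inj (gqmapK F dq)); exact: (IH aQ _ _ e).
Qed.

Lemma apply_olayer (I : instance n d) Q v : all (fun q => indisj q q) Q ->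
  apply_op (@olayer_op C m n d I Q) v = gapp (Lval I) Q v.
Proof.
rewrite /gapp; elim: Q v => [|q Q IH] v /=.
  by rewrite apply_id.
case/andP=> dq aQ; rewrite apply_mul IH // apply_query //.
Qed.

Lemma nrm2_perm (p : bits m -> bits m) (v : qstate C m) : injective p ->
  nrm2 (fun y => v (p y)) = nrm2 v.
Proof. by move=> ip; rewrite /nrm2 [RHS](reindex_inj ip). Qed.

Lemma nrm2_gapp F Q v : all (fun q => indisj q q) Q -> nrm2 (gapp F Q v) = nrm2 v.
Proof. by move=> aQ; apply: nrm2_perm; apply: gperm_inj. Qed.


Lemma all_andb (T : Type) (a b : pred T) s :
  all (fun x => a x && b x) s = all a s && all b s.
Proof. by elim: s => //= x s ->; case: (a x); case: (b x); rewrite ?andbF. Qed.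

Lemma has_eq_all (T : Type) (P p1 p2 : pred T) s : all P s ->
  (forall x, P x -> p1 x = p2 x) -> has p1 s = has p2 s.
Proof. by move=> + h; elim: s => //= x s IH /andP [Px Ps]; rewrite h // IH. Qed.

Lemma good_all Q : good Q -> all (fun q => all (indisj q) Q) Q.
Proof.
elim: Q => [|a Q IH] //.
rewrite /good /=.
case/andP=> /andP [pa pQ] /andP [daa aQ].
have := pa; rewrite all_andb => /andP [pa1 pa2].
rewrite daa pa1 /= all_andb pa2 /=; apply: IH; exact/andP.
Qed.

Definition Dh (F G : Ftype) q w : bool :=
  F (qidx q) (qx q w) (qz q w) != G (qidx q) (qx q w) (qz q w).

Lemma Dh_gqmap F G H q q' w : indisj q q' -> Dh F G q (gqmap H q' w) = Dh F G q w.
Proof. by move=> dj; rewrite /Dh qx_gqmap // qz_gqmap. Qed.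

Lemma Dh_gperm F G H q Q w : all (indisj q) Q -> Dh F G q (gperm H Q w) = Dh F G q w.
Proof.
elim: Q w => [|q' Q IH] w //= /andP [d1 d2]; by rewrite IH // Dh_gqmap.
Qed.

Lemma gqmap_eq F G q w : ~~ Dh F G q w -> gqmap F q w = gqmap G q w.
Proof. by rewrite /Dh negbK /gqmap => /eqP ->. Qed.

Lemma gperm_eq F G Q y : good Q -> ~~ has (fun q => Dh F G q y) Q ->
  gperm F Q y = gperm G Q y.
Proof.
elim: Q y => [|q Q IH] y //=; rewrite /good /=.
case/andP=> /andP [pa pQ] /andP [daa aQ]; rewrite negb_or => /andP [nq nQ].
rewrite (@gqmap_eq F G) //; apply: IH; first exact/andP.
rewrite (@has_eq_all _ (fun q' => indisj q' q) _ (fun q' => Dh F G q' y)) //.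
  by apply: sub_all pa => x /andP [].
by move=> x dx; rewrite Dh_gqmap.
Qed.

Lemma has_le_sum (T : Type) (p : pred T) s :
  (has p s)%:R <= \sum_(x <- s) (p x)%:R :> C.
Proof.
elim: s => [|x s IH] /=; first by rewrite big_nil.
rewrite big_cons; case: (p x) => /=.
  by rewrite lerDl sumr_ge0 // => i _; rewrite ler0n.
by rewrite add0r.
Qed.

Lemma round_diff F G Q v : good Q ->
  nrm2 (vsub (gapp F Q v) (gapp G Q v)) <=
  4 * \sum_(q <- Q) \sum_w (Dh F G q w)%:R * `|v w| ^+ 2.
Proof.
move=> gQ; have aQ := good_all gQ.
have sQ : all (fun q => indisj q q) Q by case/andP: gQ.
pose hit y := has (fun q => Dh F G q y) Q.
have hinv H y : hit (gperm H Q y) = hit y.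
  apply: (has_eq_all aQ) => q aq; exact: Dh_gperm.
have reid H : \sum_y (hit y)%:R * `|v (gperm H Q y)| ^+ 2 = \sum_w (hit w)%:R * `|v w| ^+ 2 :> C.
  rewrite [RHS](reindex_inj (@gperm_inj H Q sQ)) /=.
  by apply: eq_bigr => y _; rewrite hinv.
apply: le_trans (_ : \sum_y (hit y)%:R * (2 * `|v (gperm F Q y)| ^+ 2 +
                    2 * `|v (gperm G Q y)| ^+ 2) <= _).
  apply: ler_sum => y _; rewrite /vsub /gapp.
  case: (boolP (hit y)) => h.
    by rewrite mul1r -(normrN (v (gperm G Q y))) normD2.
  by rewrite (gperm_eq gQ h) subrr normr0 expr0n mul0r.
under eq_bigr do rewrite mulrDr.
rewrite big_split /=.
have reid2 H : \sum_y (hit y)%:R * (2 * `|v (gperm H Q y)| ^+ 2) = 2 * \sum_w (hit w)%:R * `|v w| ^+ 2 :> C.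
  rewrite -(reid H) mulr_sumr; apply: eq_bigr => y _; by rewrite mulrCA.
rewrite !reid2 -mulrDl.
have -> : (2 + 2 : C) = 4 by rewrite -natrD.
rewrite ler_wpM2l // exchange_big /=.
apply: ler_sum => w _; rewrite -mulr_suml ler_wpM2r ?exprn_ge0 //.
exact: has_le_sum.
Qed.

End B.

Section Csec.
Variable C : numClosedFieldType.
Variables n d : nat.

Definition tau (i : 'I_n) (u x : bits n) : bits n := [ffun l => addb (x l) (x i && u l)].

Lemma tauK i (u : bits n) : u i = false -> involutive (tau i u).
Proof.
move=> ui x; apply/ffunP => l; rewrite !ffunE ui andbF addbF.
by rewrite -addbA addbb addbF.
Qed.

Lemma tau_xor i u x y : tau i u (bxor x y) = bxor (tau i u x) (tau i u y).
Proof.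
apply/ffunP => l; rewrite !ffunE.
by case: (x i); case: (y i); case: (x l); case: (y l); case: (u l).
Qed.

Lemma tau0 i u : tau i u (bzero n) = bzero n.
Proof. by apply/ffunP => l; rewrite !ffunE. Qed.

Lemma simon_tau i (u : bits n) f s : u i = false -> is_simon f s ->
  is_simon [ffun x => f (tau i u x)] (tau i u s).
Proof.
move=> ui /andP [s0 /forallP hf]; have K := tauK ui.
apply/andP; split.
  apply: contra s0 => /eqP e; by rewrite -(K s) e tau0.
apply/forallP => x; apply/forallP => y; rewrite !ffunE.
move: (hf (tau i u x)) => /forallP /(_ (tau i u y)).
rewrite (inj_eq (can_inj K)).
have -> : bxor (tau i u x) s = tau i u (bxor x (tau i u s)) by rewrite tau_xor K.
by rewrite (inj_eq (can_inj K)).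
Qed.

Definition Phi (k : 'I_d.+1) i u (I : instance n d) : instance n d :=
  [ffun l => if l == k then ([ffun x => (I l).1 (tau i u x)], tau i u (I l).2) else I l].

Lemma PhiK k i (u : bits n) : u i = false -> involutive (Phi k i u).
Proof.
move=> ui I; have K := tauK ui; apply/ffunP => l; rewrite !ffunE.
case: eqP => [->|//] /=; rewrite K.
case: (I k) => f s /=; congr pair; apply/ffunP => x; by rewrite !ffunE K.
Qed.

Lemma valid_Phi k i (u : bits n) I : u i = false -> valid_instance I -> valid_instance (Phi k i u I).
Proof.
move=> ui /forallP vI; apply/forallP => l; rewrite ffunE.
case: eqP => _ //=; exact: simon_tau.
Qed.

Lemma valid_PhiE k i (u : bits n) I : u i = false -> valid_instance (Phi k i u I) = valid_instance I.
Proof.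
move=> ui; apply/idP/idP; last exact: valid_Phi.
by move/(valid_Phi k ui); rewrite PhiK.
Qed.

Definition Ssum (k : 'I_d.+1) (X : instance n d -> C) (z : bits n) : C :=
  \sum_(I | valid_instance I) ((I k).2 == z)%:R * X I.

Definition dep_off (k : 'I_d.+1) (X : instance n d -> C) :=
  forall I I' : instance n d, (forall l, l != k -> I l = I' l) -> X I = X I'.

Lemma Ssum_tau k X i (u : bits n) z : dep_off k X -> u i = false ->
  Ssum k X z = Ssum k X (tau i u z).
Proof.
move=> dX ui; have K := tauK ui; rewrite /Ssum.
rewrite (reindex_inj (can_inj (PhiK k ui))) /=.
apply: eq_big => I; first by rewrite valid_PhiE.
move=> _; congr (_ * _).
  rewrite ffunE eqxx /=; congr (_%:R).
  by rewrite -(inj_eq (can_inj K)) K.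
apply: dX => l nl; by rewrite ffunE (negbTE nl).
Qed.

Lemma Ssum_share k X (z z' : bits n) i : dep_off k X -> z i -> z' i ->
  Ssum k X z = Ssum k X z'.
Proof.
move=> dX zi z'i; set u := bxor z z'.
have ui : u i = false by rewrite ffunE zi z'i.
rewrite (Ssum_tau z dX ui); congr Ssum.
by apply/ffunP => l; rewrite !ffunE zi /= addbA addbb.
Qed.

Lemma nz_bit (z : bits n) : z != bzero n -> exists i, z i.
Proof.
move=> nz; case: (pickP (fun i => z i)) => [i zi|h]; first by exists i.
by case/eqP: nz; apply/ffunP => l; rewrite !ffunE h.
Qed.

Lemma Ssum_eq k X z z' : dep_off k X -> z != bzero n -> z' != bzero n ->
  Ssum k X z = Ssum k X z'.
Proof.
move=> dX /nz_bit [i zi] /nz_bit [j zj].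
pose e : bits n := [ffun l => (l == i) || (l == j)].
rewrite (@Ssum_share k X z e i) ?ffunE ?eqxx //.
by apply: (@Ssum_share k X e z' j); rewrite ?ffunE ?eqxx ?orbT.
Qed.

Lemma card_bits : #|bits n| = (2 ^ n)%N.
Proof. by rewrite card_ffun card_bool card_ord. Qed.

Lemma Ssum_avg k X z : dep_off k X -> (forall I, 0 <= X I) ->
  ((2 ^ n).-1)%:R * Ssum k X z <= \sum_(I | valid_instance I) X I.
Proof.
move=> dX X0.
have S0 : Ssum k X (bzero n) = 0.
  rewrite /Ssum big1 // => I /forallP /(_ k) /andP [nz _].
  by rewrite (negbTE nz) mul0r.
have tot : \sum_(I | valid_instance I) X I = \sum_z Ssum k X z.
  rewrite /Ssum exchange_big /=; apply: eq_bigr => I _.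
  rewrite (bigD1 (I k).2) //= eqxx mul1r big1 ?addr0 // => z1 nz.
  by rewrite eq_sym (negbTE nz) mul0r.
case: (eqVneq z (bzero n)) => [->|nz].
  by rewrite S0 mulr0 sumr_ge0.
rewrite tot (bigD1 (bzero n)) //= S0 add0r.
rewrite (eq_bigr (fun _ => Ssum k X z)); last by move=> z' nz'; apply: Ssum_eq.
rewrite sumr_const -mulr_natl.
have -> : #|[pred i | i != bzero n]| = (2 ^ n).-1.
  by rewrite -card_bits -(cardC1 (bzero n)); apply: eq_card => x.
by rewrite mulr1 mulr_natl.
Qed.

End Csec.

Section D.
Variable C : numClosedFieldType.
Variables m n d : nat.
Variable c : circuit C m n d.
Hypothesis vc : valid_circuit c.

Definition Qn (t : nat) : olayer m n d := if insub t is Some j then cQ c j else [::].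
Definition Un (t : nat) : layer C m := cU c (inord t).

Lemma Qn_val (j : 'I_d) : Qn j = cQ c j.
Proof. by rewrite /Qn valK. Qed.

Lemma good_Qn t : good (Qn t).
Proof.
rewrite /Qn; case: insub => [j|//]; apply: valid_good; by case: vc => _ [].
Qed.

Lemma vlayer_Un t : valid_layer (Un t).
Proof. by case: vc => h _; apply: h. Qed.

Fixpoint grun (Fs : nat -> Ftype n d) (T : nat) : qstate C m :=
  if T is T'.+1 then apply_op (layer_op (Un T'.+1)) (gapp (Fs T') (Qn T') (grun Fs T'))
  else apply_op (layer_op (cU c ord0)) (@init_state C m).

Lemma foldl_grun (I : instance n d) T :
  foldl (fun v t => apply_op (layer_op (Un t.+1)) (gapp (Lval I) (Qn t) v))
     (grun (fun _ => Lval I) 0) (iota 0 T) = grun (fun _ => Lval I) T.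
Proof.
elim: T => [|T IH] //.
by rewrite -addn1 iotaD foldl_cat IH /= add0n addn1.
Qed.

Lemma foldl_map' (A B T : Type) (f : A -> B -> A) (h : T -> B) z s :
  foldl f z (map h s) = foldl (fun z x => f z (h x)) z s.
Proof. by elim: s z => //= x s IH z. Qed.

Lemma final_grun (I : instance n d) : final_state c I = grun (fun _ => Lval I) d.
Proof.
pose g (v : qstate C m) (t : nat) :=
  apply_op (layer_op (Un t.+1)) (gapp (Lval I) (Qn t) v).
have fE : (fun (v : qstate C m) (j : 'I_d) =>
           apply_op (layer_op (cU c (lift ord0 j))) (apply_op (@olayer_op C m n d I (cQ c j)) v))
          = (fun v j => g v (val j)).
  apply: functional_extensionality => v; apply: functional_extensionality => j.
  rewrite /g Qn_val apply_olayer; last first.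
    by case: vc => _ [/(_ j) /valid_good /andP []].
  congr (apply_op (layer_op (cU c _)) _); apply: val_inj => /=.
  by rewrite inordK // ltnS.
rewrite /final_state fE -(foldl_map' g val) val_enum_ord.
exact: foldl_grun.
Qed.


Lemma nrm2_init : nrm2 (@init_state C m) = 1.
Proof.
rewrite /nrm2 (bigD1 (bzero m)) //= /init_state eqxx normr1 expr1n big1 ?addr0 //.
by move=> w /negbTE ->; rewrite normr0 expr0n.
Qed.

Lemma nrm2_grun Fs T : nrm2 (grun Fs T) = 1.
Proof.
elim: T => [|T IH] /=.
  by rewrite nrm2_layer ?nrm2_init //; case: vc => h _; apply: h.
rewrite nrm2_layer; last exact: vlayer_Un.
rewrite nrm2_gapp // .
by case/andP: (good_Qn T).
Qed.

Definition Bl (I : instance n d) (t : nat) : Ftype n d :=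
  fun j x z => if (j <= t)%N then Lval I j x z else None.

Lemma Bl_dep (I I' : instance n d) t :
  (forall l : 'I_d.+1, (l <= t)%N -> I l = I' l) -> Bl I t = Bl I' t.
Proof.
move=> h; apply: functional_extensionality => j.
apply: functional_extensionality => x; apply: functional_extensionality => z.
rewrite /Bl; case: leqP => // jt; rewrite /Lval (h j jt) (h (inord j.-1)) //.
have jd : (j.-1 < d.+1)%N by apply: leq_ltn_trans (leq_pred j) (ltn_ord j).
by rewrite inordK // (leq_trans (leq_pred j) jt).
Qed.

Lemma blind_dep (I I' : instance n d) T :
  (forall l : 'I_d.+1, (l < T)%N -> I l = I' l) -> grun (Bl I) T = grun (Bl I') T.
Proof.
elim: T => [|T IH] h //=.
rewrite (@Bl_dep I I' T) ?IH // => l lT; apply: h => //; exact: ltnW.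
Qed.

Lemma nrm2_add2 (u v : qstate C m) :
  nrm2 (fun w => u w + v w) <= 2 * nrm2 u + 2 * nrm2 v.
Proof.
rewrite /nrm2 !mulr_sumr -big_split /=; apply: ler_sum => w _; exact: normD2.
Qed.

Definition Dl (I : instance n d) T : qstate C m :=
  vsub (grun (fun _ => Lval I) T) (grun (Bl I) T).
Definition ee (I : instance n d) t : C :=
  nrm2 (vsub (gapp (Lval I) (Qn t) (grun (Bl I) t)) (gapp (Bl I t) (Qn t) (grun (Bl I) t))).

Lemma ee_ge0 I t : 0 <= ee I t.
Proof. exact: nrm2_ge0. Qed.

Lemma delta_step I T : nrm2 (Dl I T.+1) <= 2 * nrm2 (Dl I T) + 2 * ee I T.
Proof.
rewrite /Dl /= -apply_opB nrm2_layer; last exact: vlayer_Un.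
set r := grun _ T; set b := grun _ T.
have -> : vsub (gapp (Lval I) (Qn T) r) (gapp (Bl I T) (Qn T) b) =
   (fun w => gapp (Lval I) (Qn T) (vsub r b) w +
       vsub (gapp (Lval I) (Qn T) b) (gapp (Bl I T) (Qn T) b) w).
  apply: functional_extensionality => w; rewrite /vsub /gapp; ring.
apply: le_trans (nrm2_add2 _ _) _.
rewrite nrm2_gapp //; by case/andP: (good_Qn T).
Qed.

Lemma delta_bound I T : nrm2 (Dl I T) <= 2 ^+ T * \sum_(t < T) ee I t.
Proof.
elim: T => [|T IH].
  rewrite /Dl /nrm2 big1 ?big_ord0 ?mulr0 // => w _.
  by rewrite /vsub subrr normr0 expr0n.
apply: le_trans (delta_step I T) _.
rewrite big_ord_recr /= exprS -mulrA mulrDr.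
rewrite mulrDr; apply: lerD; first by rewrite ler_wpM2l.
rewrite ler_wpM2l // -{1}(mul1r (ee I T)) ler_wpM2r ?ee_ge0 //.
by rewrite exprn_ege1 // ler1n.
Qed.


Lemma size_olayer (Q : olayer m n d) : valid_olayer Q -> (size Q <= m)%N.
Proof.
case=> _ pQ; pose f (q : query m n d) := qout q ord0.
have uQ : uniq (map f Q).
  rewrite uniq_pairwise pairwise_map; apply: sub_pairwise pQ => q q' dj /=.
  apply/eqP => e.
  have h1 : f q \in qsupp q by rewrite /qsupp inE; apply/orP; right; apply/imsetP; exists ord0.
  have h2 : f q \in qsupp q' by rewrite e /qsupp inE; apply/orP; right; apply/imsetP; exists ord0.
  by rewrite (disjointFr dj h1) in h2.
have := uniq_leq_size uQ (s2 := enum 'I_m) (fun x _ => mem_enum _ x).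
by rewrite size_map size_enum_ord.
Qed.

Lemma size_Qn t : (size (Qn t) <= m)%N.
Proof.
rewrite /Qn; case: insub => [j|//]; apply: size_olayer; by case: vc => _ [].
Qed.

Lemma Dh_le (I : instance n d) t (q : query m n d) w :
  (Dh (Lval I) (Bl I t) q w)%:R <=
  (t < qidx q)%N%:R * (qz q w == (I (inord (qidx q).-1)).2)%:R :> C.
Proof.
rewrite /Dh /Bl; case: leqP => [jt|tj].
  by rewrite eqxx /= mulr_ge0 ?ler0n.
rewrite mul1r /Lval.
have -> : ((qidx q : nat) == 0%N) = false by apply/negbTE; rewrite -lt0n (leq_ltn_trans _ tj).
by case: ifP => _; rewrite /= ?lexx ?ler0n.
Qed.

Lemma sum_cond (T : finType) (P : pred T) (F : T -> C) :
  \sum_(w | P w) F w = \sum_w (P w)%:R * F w.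
Proof. by rewrite big_mkcond; apply: eq_bigr => w _; case: (P w); rewrite ?mul1r ?mul0r. Qed.

Local Notation N := (\sum_(I : instance n d | valid_instance I) (1 : C)).
Local Notation DD := (((2 ^ n).-1)%:R : C).

Lemma per_q t (q : query m n d) :
  DD * \sum_(I | valid_instance I) \sum_w (Dh (Lval I) (Bl I t) q w)%:R * `|grun (Bl I) t w| ^+ 2
  <= N.
Proof.
case: (ltnP t (qidx q)) => tq; last first.
  rewrite big1 ?mulr0 ?sumr_ge0 ?ler01 // => I _; rewrite big1 // => w _.
  have := Dh_le I t q w; rewrite ltnNge tq /= mul0r => h.
  suff -> : Dh (Lval I) (Bl I t) q w = false by rewrite mul0r.
  by apply/negbTE; apply: contraTN h => ->; rewrite ler10.
set k : 'I_d.+1 := inord (qidx q).-1.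
have kv : (k : nat) = (qidx q).-1.
  by rewrite inordK // (leq_ltn_trans (leq_pred _) (ltn_ord _)).
apply: le_trans (_ : DD * \sum_w Ssum k (fun I => `|grun (Bl I) t w| ^+ 2) (qz q w) <= _).
  rewrite ler_wpM2l ?ler0n // /Ssum exchange_big /=.
  apply: ler_sum => w _; apply: ler_sum => I _; rewrite ler_wpM2r ?exprn_ge0 //.
  by apply: le_trans (Dh_le I t q w) _; rewrite tq mul1r eq_sym.
rewrite mulr_sumr.
apply: le_trans (_ : \sum_w \sum_(I | valid_instance I) `|grun (Bl I) t w| ^+ 2 <= _).
  apply: ler_sum => w _; apply: Ssum_avg => [I I' h|I]; last exact: exprn_ge0.
  rewrite (@blind_dep I I') // => l lt; apply: h; apply/eqP => e.
  move: lt; rewrite e kv; lia.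
rewrite exchange_big /=; apply: ler_sum => I _.
by have := nrm2_grun (Bl I) t; rewrite /nrm2 => ->.
Qed.


Lemma sum_seq_le (T : Type) (Q : seq T) (f : T -> C) (K : C) :
  (forall q, f q <= K) -> \sum_(q <- Q) f q <= (size Q)%:R * K.
Proof.
move=> h; elim: Q => [|q Q IH]; first by rewrite big_nil mul0r.
by rewrite big_cons /= -addn1 natrD mulrDl mul1r addrC lerD.
Qed.

Lemma N_ge0 : 0 <= N.
Proof. by rewrite sumr_ge0 // => I _; rewrite ler01. Qed.

Lemma ee_sum t : DD * \sum_(I | valid_instance I) ee I t <= 4 * m%:R * N.
Proof.
apply: le_trans (_ : DD * (4 * \sum_(q <- Qn t) \sum_(I | valid_instance I)
   \sum_w (Dh (Lval I) (Bl I t) q w)%:R * `|grun (Bl I) t w| ^+ 2) <= _).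
  rewrite ler_wpM2l ?ler0n //.
  apply: le_trans (_ : \sum_(I | valid_instance I) (4 * \sum_(q <- Qn t)
     \sum_w (Dh (Lval I) (Bl I t) q w)%:R * `|grun (Bl I) t w| ^+ 2) <= _).
    apply: ler_sum => I _; apply: round_diff; exact: good_Qn.
  by rewrite -mulr_sumr ler_wpM2l // exchange_big.
rewrite mulrCA mulr_sumr -mulrA ler_wpM2l //.
apply: le_trans (sum_seq_le _ (fun q => per_q t q)) _.
by rewrite ler_wpM2r ?N_ge0 // ler_nat size_Qn.
Qed.

Definition Pout (I : instance n d) (w : bits m) : bool :=
  [ffun j => w (cout c j)] == (I ord_max).2.

Lemma final_blind :
  DD * \sum_(I | valid_instance I) \sum_(w | Pout I w) `|grun (Bl I) d w| ^+ 2 <= N.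
Proof.
under eq_bigr do rewrite sum_cond.
rewrite exchange_big /= mulr_sumr.
apply: le_trans (_ : \sum_w \sum_(I | valid_instance I) `|grun (Bl I) d w| ^+ 2 <= _).
  apply: ler_sum => w _.
  rewrite /Pout; under eq_bigr do rewrite eq_sym.
  apply: (@Ssum_avg C n d ord_max (fun I => `|grun (Bl I) d w| ^+ 2) [ffun j => w (cout c j)]).
    move=> I I' h; rewrite (@blind_dep I I') // => l ld; apply: h.
    by rewrite -val_eqE /= neq_ltn ld.
  by move=> I; apply: exprn_ge0.
rewrite exchange_big /=; apply: ler_sum => I _.
by have := nrm2_grun (Bl I) d; rewrite /nrm2 => ->.
Qed.

Lemma sp_bound (I : instance n d) :
  success_prob c I <= 2 * \sum_(w | Pout I w) `|grun (Bl I) d w| ^+ 2 +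
                      2 * (2 ^+ d * \sum_(t < d) ee I t).
Proof.
rewrite /success_prob final_grun.
apply: le_trans (_ : \sum_(w | Pout I w) (2 * `|grun (Bl I) d w| ^+ 2 +
                        2 * `|Dl I d w| ^+ 2) <= _).
  apply: ler_sum => w _.
  have -> : grun (fun _ => Lval I) d w = grun (Bl I) d w + Dl I d w.
    by rewrite /Dl /vsub addrC subrK.
  exact: normD2.
rewrite big_split /= -!mulr_sumr lerD // ler_wpM2l //.
apply: le_trans (delta_bound I d).
rewrite /nrm2 [X in _ <= X](bigID (Pout I)) /= lerDl.
by apply: sumr_ge0 => w _; apply: exprn_ge0.
Qed.

Lemma total_bound :
  DD * \sum_(I | valid_instance I) success_prob c I <=
  N * (2 + 8 * 2 ^+ d * d%:R * m%:R).
Proof.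
apply: le_trans (_ : DD * \sum_(I | valid_instance I)
   (2 * \sum_(w | Pout I w) `|grun (Bl I) d w| ^+ 2 + 2 * (2 ^+ d * \sum_(t < d) ee I t)) <= _).
  by rewrite ler_wpM2l ?ler0n //; apply: ler_sum => I _; apply: sp_bound.
rewrite big_split /= mulrDr -!mulr_sumr.
rewrite mulrDr [N * _]mulrC; apply: lerD.
  by rewrite mulrCA ler_wpM2l // final_blind.
have h : DD * \sum_(I | valid_instance I) \sum_(t < d) ee I t <= d%:R * (4 * m%:R * N).
  rewrite exchange_big /= mulr_sumr.
  apply: le_trans (_ : \sum_(t < d) (4 * m%:R * N) <= _).
    by apply: ler_sum => t _; exact: ee_sum.
  by rewrite sumr_const card_ord [X in _ <= X]mulr_natl.
set S := \sum_(I | valid_instance I) \sum_(t < d) ee I t.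
have -> : DD * (2 * (2 ^+ d * S)) = 2 * 2 ^+ d * (DD * S) by ring.
apply: le_trans (_ : 2 * 2 ^+ d * (d%:R * (4 * m%:R * N)) <= _).
  by rewrite ler_wpM2l // mulr_ge0 // exprn_ge0.
have -> : (8 : C) = 2 * 4 by rewrite -natrM.
rewrite [X in _ <= X](_ : _ = 2 * 2 ^+ d * (d%:R * (4 * m%:R * N))) //; ring.
Qed.


Lemma avg_bound (P : nat) : (1 <= n)%N -> (2 * (2 + 8 * 2 ^ d * d * m) <= P)%N ->
  avg_success c <= P%:R / 2%:R ^+ n.
Proof.
move=> n1 hP.
have NE : N = (#|[set I : instance n d | valid_instance I]|)%:R.
  rewrite (eq_bigl (fun I => I \in [set I : instance n d | valid_instance I])); last first.
    by move=> I; rewrite inE.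
  by rewrite sumr_const.
rewrite /avg_success -NE.
have tb := total_bound.
set S := \sum_(I | valid_instance I) success_prob c I in tb *.
have p2 : (0 : C) < 2%:R ^+ n by rewrite exprn_gt0 // ltr0n.
case: (eqVneq N 0) => [->|N0].
  by rewrite invr0 mulr0 divr_ge0 ?ler0n // ltW.
have Np : 0 < N by rewrite lt0r N0 N_ge0.
have D1 : (1 <= (2 ^ n).-1)%N.
  by rewrite -ltnS prednK ?expn_gt0 // -{1}(expn0 2) ltn_exp2l.
have Dp : (0 : C) < DD by rewrite ltr0n.
rewrite ler_pdivrMr // mulrAC ler_pdivlMr //.
rewrite -(ler_pM2l Dp) mulrA.
apply: le_trans (_ : N * (2 + 8 * 2 ^+ d * d%:R * m%:R) * 2%:R ^+ n <= _).
  by rewrite ler_wpM2r // ltW.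
have hn : ((2 + 8 * 2 ^ d * d * m) * 2 ^ n <= P * (2 ^ n).-1)%N.
  have h2 : (2 ^ n <= 2 * (2 ^ n).-1)%N.
    by rewrite -{1}(prednK (expn_gt0 2 n)); lia.
  apply: leq_trans (leq_mul (leqnn _) h2) _; rewrite mulnA; apply: leq_mul => //.
  by rewrite mulnC.
have hC : (2 + 8 * 2 ^+ d * d%:R * m%:R) * 2%:R ^+ n <= P%:R * DD :> C.
  have := hn; rewrite -(ler_nat C) !natrM !natrD !natrM !natrX => h.
  exact: h.
apply: le_trans (_ : N * (P%:R * DD) <= _); first by rewrite -mulrA ler_wpM2l // ltW.
by rewrite [X in _ <= X](_ : _ = N * (P%:R * DD)) //; ring.
Qed.

End D.

Lemma arith n a K m : (1 <= n)%N -> (m <= n ^ a + a)%N ->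
  (4 + 2 * K * m <= n ^ (a + (2 * K * (a + 1) + 4)) + (a + (2 * K * (a + 1) + 4)))%N.
Proof.
move=> n1 hm; set e := (2 * K * (a + 1) + 4)%N.
case: (ltngtP n 1) => [|n2|en]; first by case: n n1 hm.
  have he : (e <= n ^ e)%N by apply: ltnW; apply: ltn_expl.
  have na : (1 <= n ^ a)%N by rewrite expn_gt0 (leq_trans _ n2).
  rewrite expnD.
  have := leq_mul (leqnn (n ^ a)) he.
  set P := (n ^ a)%N in hm na *; set E := (n ^ e)%N; rewrite /e; nia.
rewrite en exp1n; rewrite en exp1n in hm; rewrite /e; nia.
Qed.


Theorem mainTheorem1 :
  forall (R : realType) (d : nat), (1 <= d)%N ->
  forall a : nat, exists b : nat,
  forall (n m : nat), (1 <= n)%N -> (m <= n ^ a + a)%N ->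
  forall c : circuit R[i] m n d, valid_circuit c ->
  avg_success c <= (n ^ b + b)%:R / 2%:R ^+ n.
Proof.
move=> R d d1 a.
exists (a + (2 * (8 * 2 ^ d * d) * (a + 1) + 4))%N.
move=> n m n1 hm c vc.
apply: avg_bound => //.
have := arith (8 * 2 ^ d * d) n1 hm.
set K := (8 * 2 ^ d * d)%N; move=> h; apply: leq_trans h.
rewrite -!mulnA; lia.
Qed.
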